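(* Let $\mathcal{G}=(\mathcal{V},\mathcal{E})$ be a finite tree with root $r$, edges oriented away from $r$, and incidence matrix $\Omega$. Let $f:[0,1]\to\mathcal{P}(\mathcal{V})$ be continuously differentiable with tails $F(t)_x$. Put $s(t)=\sum_{x\in\mathcal{V}}|\partial_t F(t)_x|$. (i) For every $t\in[0,1]$, $s(t)=|\dot f|_{W_1}(t)$. (ii) Suppose moreover that $f$ is a constant speed $W_1$-geodesic with $f(0)\neq f(1)$. Then $s(t)=W_1(f(0),f(1))>0$ for all $t$. Define the constant speed solution by $$v(t)_k=\operatorname{sign}(\partial_tF(t)_{\lceil k\rceil})\,s(t),\qquad g(t)_k=|\partial_tF(t)_{\lceil k\rceil}|/s(t).$$ Then $(f,v,g)$ satisfies the discrete transport equation, and $\mathcal{I}_q(v,g)=W_1(f(0),f(1))$ for every $q\ge 1$.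
   Context: For a finite graph $\mathcal{G}=(\mathcal{V},\mathcal{E})$ whose edges have been given an orientation, each edge $k$ goes from its tail vertex $\lfloor k\rfloor$ to its head vertex $\lceil k\rceil$. The incidence matrix $\Omega=(\omega_{x,k})$ has $\omega_{x,k}=1$ if $x=\lceil k\rceil$, $\omega_{x,k}=-1$ if $x=\lfloor k\rfloor$, and $\omega_{x,k}=0$ otherwise. $\mathcal{P}(\mathcal{V})$ and $\mathcal{P}(\mathcal{E})$ denote probability vectors on $\mathcal{V}$ and on $\mathcal{E}$. $W_1$ is the Wasserstein-1 distance on $\mathcal{P}(\mathcal{V})$ for the cost $d(x,y)$ equal to the shortest-path distance in the underlying undirected graph (unit edge lengths): $W_1(\mu,\nu)=\min_{\pi}\sum_{x,y}d(x,y)\pi(x,y)$, the minimum taken over couplings $\pi$ of $\mu$ and $\nu$. A path $f:[0,1]\to\mathcal{P}(\mathcal{V})$ is a constant speed $W_1$-geodesic if $W_1(f(s),f(t))=|s-t|\,W_1(f(0),f(1))$ for all $s,t\in[0,1]$. Its metric speed is $|\dot f|_{W_1}(t)=\lim_{h\to0}W_1(f(t+h),f(t))/|h|$. A triple $(f,v,g)$ consists of an absolutely continuous $f:[0,1]\to\mathcal{P}(\mathcal{V})$, a measurable $v:[0,1]\to\mathbb{R}^{\mathcal{E}}$ and a measurable $g:[0,1]\to\mathcal{P}(\mathcal{E})$. It satisfies the discrete transport equation if $\partial_t f(t)_x=\sum_{k}\omega_{x,k}v(t)_kg(t)_k$ for a.e. $t$ and all $x$. For $q\ge1$, $\mathcal{I}_q(v,g)=\big(\int_0^1\sum_{k\in\mathcal{E}}g(t)_k|v(t)_k|^q\,dt\big)^{1/q}$.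 For a tree rooted at $r$ with edges oriented away from $r$, $U(x)$ is the vertex set of the subtree rooted at $x$ (including $x$), and $F(t)_x=\sum_{y\in U(x)}f(t)_y$. *)

(* Defs.v *)
From HB Require Import structures.
From mathcomp Require Import all_boot all_order all_algebra.
From mathcomp Require Import all_classical all_reals all_analysis.
Set Implicit Arguments. Unset Strict Implicit. Unset Printing Implicit Defensive.
Import Order.TTheory GRing.Theory Num.Theory.
Import numFieldNormedType.Exports.
Local Open Scope classical_set_scope.
Local Open Scope ring_scope.

Section TreeW1.
Variables (R : realType) (V E : finType) (tl hd : E -> V).

Definition adj : rel V := fun a b =>
  [exists k, ((tl k == a) && (hd k == b)) || ((tl k == b) && (hd k == a))].

Definition nball (x : V) (n : nat) : {set V} :=
  iter n (fun S => S :|: [set b | [exists a in S, adj a b]]%SET) [set x]%SET.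

(* shortest-path distance (unit edge lengths); in a connected graph it is
   always < #|V| so the truncation at #|V| is never active *)
Definition gdist (x y : V) : nat :=
  \big[minn/#|V|]_(n < #|V| | y \in nball x n) n.

Definition is_tree : Prop :=
  (forall x y, connect adj x y) /\ #|E| = #|V|.-1.

Definition oriented_away (r : V) : Prop :=
  forall k, (gdist r (tl k) < gdist r (hd k))%N.

Definition omega (x : V) (k : E) : R := (hd k == x)%:R - (tl k == x)%:R.

Definition dadj : rel V := fun a b => [exists k, (tl k == a) && (hd k == b)].
Definition subtree (x : V) : {set V} := [set y | connect dadj x y]%SET.

Definition tails (f : R -> V -> R) (t : R) (x : V) : R :=
  \sum_(y in subtree x) f t y.

Definition isProb (T : finType) (mu : T -> R) : Prop :=
  (forall x, 0 <= mu x) /\ \sum_x mu x = 1.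

Definition coupling (mu nu : V -> R) (pi : V -> V -> R) : Prop :=
  [/\ forall x y, 0 <= pi x y,
      forall x, \sum_y pi x y = mu x &
      forall y, \sum_x pi x y = nu y].

(* Wasserstein-1 distance (min over couplings, written as the infimum) *)
Definition W1 (mu nu : V -> R) : R :=
  inf [set c | exists pi, coupling mu nu pi /\
               c = \sum_x \sum_y (gdist x y)%:R * pi x y].

Definition metric_speed_is (f : R -> V -> R) (t l : R) : Prop :=
  (fun h => W1 (f (t + h)) (f t) / `|h|) @ within [set h | 0 <= t + h <= 1] (0 : R)^'
    --> l.

Definition C1_on01 (f df : R -> V -> R) : Prop :=
  (forall x t, 0 <= t <= 1 ->
     (fun h => (f (t + h) x - f t x) / h) @ within [set h | 0 <= t + h <= 1] (0 : R)^'
       --> df t x) /\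
  (forall x, {within `[0, 1], continuous (fun t => df t x)}).

Definition const_speed_geodesic (f : R -> V -> R) : Prop :=
  forall s t, 0 <= s <= 1 -> 0 <= t <= 1 ->
    W1 (f s) (f t) = `|s - t| * W1 (f 0) (f 1).

Definition transport_eq (df : R -> V -> R) (v g : R -> E -> R) : Prop :=
  {ae (@lebesgue_measure R), forall t, `[0%R, 1%R]%classic t ->
     forall x, df t x = \sum_k omega x k * v t k * g t k}.

Definition Iq (v g : R -> E -> R) (q : R) : R :=
  (fine (\int[@lebesgue_measure R]_(t in `[0, 1])
           (\sum_k g t k * (`|v t k| `^ q))%:E)) `^ q^-1.

End TreeW1.

(* Main.v *)
Require Import Defs.
From HB Require Import structures.
From mathcomp Require Import all_boot all_order all_algebra.
From mathcomp Require Import all_classical all_reals all_analysis.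
Set Implicit Arguments. Unset Strict Implicit. Unset Printing Implicit Defensive.
Import Order.TTheory GRing.Theory Num.Theory.
Import numFieldNormedType.Exports.
Local Open Scope classical_set_scope.
Local Open Scope ring_scope.

Section G.
Variables (V E : finType) (tl hd : E -> V).

Lemma gdist_spec x y : (gdist tl hd x y = #|V|) \/
  (exists n, [/\ (n < #|V|)%N, y \in nball tl hd x n & gdist tl hd x y = n]).
Proof.
rewrite /gdist.
apply: (big_ind (fun v => v = #|V| \/ exists n, [/\ (n < #|V|)%N, y \in nball tl hd x n & v = n])).
- by left.
- move=> a b Ha Hb; rewrite /minn; case: ifP => _; [exact: Ha|exact: Hb].
- move=> i Hi; right; exists i; split => //.
Qed.

Lemma gdist_leV x y : (gdist tl hd x y <= #|V|)%N.
Proof. by case: (gdist_spec x y) => [->|[n [H1 _ ->]]] //; apply: ltnW. Qed.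

Lemma gdist_le x y n : y \in nball tl hd x n -> (n < #|V|)%N -> (gdist tl hd x y <= n)%N.
Proof.
move=> Hy Hn; rewrite /gdist.
have : Ordinal Hn \in index_enum 'I_#|V| by rewrite mem_index_enum.
elim: (index_enum _) => // i s IH; rewrite inE big_cons => /orP[/eqP <-|/IH H].
  by rewrite Hy; exact: geq_minl.
by case: ifP => _ //; exact: leq_trans (geq_minr _ _) H.
Qed.

Lemma gdist_le' x y n : y \in nball tl hd x n -> (gdist tl hd x y <= n)%N.
Proof.
move=> Hy; case: (ltnP n #|V|) => Hn; first exact: gdist_le.
exact: leq_trans (gdist_leV _ _) Hn.
Qed.

Lemma nballS x n : nball tl hd x n.+1 =
  (nball tl hd x n :|: [set b | [exists a in nball tl hd x n, adj tl hd a b]])%SET.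
Proof. by []. Qed.

Lemma iter_step_mono (A B : {set V}) m : (A \subset B)%SET ->
  (iter m (fun S => S :|: [set b | [exists a in S, adj tl hd a b]]) A \subset
   iter m (fun S => S :|: [set b | [exists a in S, adj tl hd a b]]) B)%SET.
Proof.
move=> AB; elim: m => //= m IH.

apply/fintype.subsetP => z; rewrite !inE => /orP[Hz|/existsP[a /andP[Ha Haz]]].
  by rewrite (fintype.subsetP IH z Hz).
apply/orP; right; apply/existsP; exists a; rewrite Haz andbT.
exact: (fintype.subsetP IH).
Qed.

Lemma nball_trans x y z n m : y \in nball tl hd x n -> z \in nball tl hd y m ->
  z \in nball tl hd x (m + n).
Proof.
move=> Hy Hz; rewrite /nball iterD.
apply: (fintype.subsetP (iter_step_mono m _)) Hz.
by rewrite finset.sub1set.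
Qed.

Lemma nball_refl x n : x \in nball tl hd x n.
Proof. elim: n => [|n IH]; first by rewrite /nball /= inE. by rewrite nballS inE IH. Qed.

Lemma gdist_triangle x y z :
  (gdist tl hd x z <= gdist tl hd x y + gdist tl hd y z)%N.
Proof.
case: (gdist_spec x y) => [->|[n [_ Hn ->]]].
  exact: leq_trans (gdist_leV _ _) (leq_addr _ _).
case: (gdist_spec y z) => [->|[m [_ Hm ->]]].
  exact: leq_trans (gdist_leV _ _) (leq_addl _ _).
rewrite addnC; apply: gdist_le'; exact: nball_trans Hn Hm.
Qed.

Lemma gdist_refl x : gdist tl hd x x = 0%N.
Proof.
apply/eqP; rewrite -leqn0; apply: gdist_le; first by rewrite /nball /= inE.
by apply/card_gt0P; exists x.
Qed.

Lemma gdist_adj a b : adj tl hd a b -> (gdist tl hd a b <= 1)%N.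
Proof.
move=> Hab; apply: gdist_le'.
rewrite nballS inE; apply/orP; right; rewrite inE; apply/existsP; exists a.
by rewrite /nball /= inE eqxx.
Qed.

End G.
Section G2.
Variables (V E : finType) (tl hd : E -> V).
Lemma adj_sym a b : adj tl hd a b = adj tl hd b a.
Proof.
by apply/existsP/existsP => -[k Hk]; exists k; rewrite orbC.
Qed.

Lemma nball_sym x y n : y \in nball tl hd x n -> x \in nball tl hd y n.
Proof.
elim: n y => [|n IH] y; first by rewrite /nball /= !inE eq_sym.
rewrite nballS inE => /orP[/IH H|]; first by rewrite nballS inE H.
rewrite inE => /existsP[a /andP[Ha Hay]].
have H1 := IH _ Ha.
have H2 : a \in nball tl hd y 1.
  by rewrite nballS inE; apply/orP; right; rewrite inE; apply/existsP; exists y;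
     rewrite nball_refl adj_sym.
have := nball_trans H2 H1; by rewrite addn1.
Qed.

Lemma gdist_sym x y : gdist tl hd x y = gdist tl hd y x.
Proof.
by apply: eq_bigl => n; apply/idP/idP => /nball_sym.
Qed.
End G2.

Section T.
Variable R : realType.
Variables (V E : finType) (tl hd : E -> V) (r : V).
Hypothesis Htree : is_tree tl hd.
Hypothesis Hor : oriented_away tl hd r.

Local Notation dep := (gdist tl hd r).
Local Notation U := (subtree tl hd).
Local Notation step := (fun S : {set V} => S :|: [set b | [exists a in S, adj tl hd a b]])%SET.

Lemma V_gt0 : (0 < #|V|)%N.
Proof. by apply/card_gt0P; exists r. Qed.

Lemma dep_r : dep r = 0%N.
Proof. exact: gdist_refl. Qed.

Lemma hd_neq_r k : hd k != r.
Proof.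
apply/eqP => E1; have := Hor k; rewrite E1 dep_r.
by rewrite ltn0.
Qed.

Lemma nball_grow n : (n < #|nball tl hd r n|)%N \/ nball tl hd r n.+1 = nball tl hd r n.
Proof.
elim: n => [|n IH]; first by left; rewrite /nball /= cards1.
have [E1|N1] := eqVneq (nball tl hd r n.+1) (nball tl hd r n).
  by right; rewrite nballS E1.
case: IH => [H|H]; last by rewrite H eqxx in N1.
left; apply: (leq_ltn_trans H); apply: proper_card.
rewrite finset.properEneq eq_sym N1 /=; exact: finset.subsetUl.
Qed.

Lemma all_in_nball y : y \in nball tl hd r (#|V|.-1).
Proof.
case: (nball_grow (#|V|.-1)) => [H|H].
  have : nball tl hd r #|V|.-1 = [set: V]%SET.
    apply/eqP; rewrite finset.eqEcard finset.subsetT /= cardsT.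
    by move: H; rewrite prednK // V_gt0.
  by move=> ->; rewrite inE.
set S := nball tl hd r #|V|.-1 in H *.
have cl : forall a b, a \in S -> adj tl hd a b -> b \in S.
  move=> a b Ha Hab; rewrite -H nballS inE; apply/orP; right.
  by rewrite inE; apply/existsP; exists a; rewrite Ha.
have : connect (adj tl hd) r y by case: Htree.
case/connectP => p Hp ->.
have : r \in S by exact: nball_refl.
elim: p r Hp => //= a p IHp x /andP[Hxa Hp] Hx.
apply: IHp Hp _; exact: cl Hxa.
Qed.

Lemma dep_lt : forall y, (dep y < #|V|)%N.
Proof.
move=> y; apply: (leq_ltn_trans (gdist_le' (all_in_nball y))).
by rewrite prednK ?V_gt0.
Qed.

Lemma dep_in y : y \in nball tl hd r (dep y).
Proof.
case: (gdist_spec tl hd r y) => [H|[n [_ Hn ->]]] //.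
by have := dep_lt y; rewrite H ltnn.
Qed.

Lemma in_edge y : y != r -> exists k, hd k = y.
Proof.
move=> Hy.
have Hd := dep_in y.
case Ed: (dep y) Hd => [|d] Hd.
  by move: Hd; rewrite /nball /= inE (negbTE Hy).
move: Hd; rewrite nballS inE => /orP[Hd|].
  by have := gdist_le' Hd; rewrite Ed ltnn.
rewrite inE => /existsP[a /andP[Ha /existsP[k /orP[/andP[/eqP Hk1 /eqP Hk2]|/andP[/eqP Hk1 /eqP Hk2]]]]].
  by exists k.
have := Hor k; rewrite Hk1 Hk2 Ed => H.
have := gdist_le' Ha => H2.
by have := leq_trans H H2; rewrite ltnNge leqnSn.
Qed.

Lemma hd_inj : injective hd.
Proof.
have : {in [set: E]%SET &, injective hd}.
  apply/imset_injP; rewrite eqn_leq leq_imset_card /=.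
  rewrite cardsT; case: Htree => _ ->.
  rewrite -(cardsC1 r); apply: subset_leq_card.
  apply/fintype.subsetP => y; rewrite !inE => Hy.
  by have [k <-] := in_edge Hy; apply: imset_f; rewrite inE.
by move=> H x y; apply: H; rewrite inE.
Qed.

Lemma dadjE a b : dadj tl hd a b -> (dep a < dep b)%N.
Proof. by case/existsP => k /andP[/eqP <- /eqP <-]; apply: Hor. Qed.

Lemma U_refl x : x \in U x.
Proof. by rewrite inE connect0. Qed.

Lemma U_step x k : tl k \in U x -> hd k \in U x.
Proof.
rewrite !inE => H; apply: (connect_trans H); apply: connect1.
by apply/existsP; exists k; rewrite !eqxx.
Qed.

Lemma U_trans x y z : y \in U x -> z \in U y -> z \in U x.
Proof. rewrite !inE; exact: connect_trans. Qed.

Lemma U_last x y : y \in U x -> y != x -> exists k, hd k = y /\ tl k \in U x.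
Proof.
rewrite inE => /connectP[p Hp ->].
elim/last_ind: p Hp => [|p b _]; first by rewrite eqxx.
rewrite rcons_path last_rcons => /andP[Hp /existsP[k /andP[/eqP H1 /eqP H2]]] _.
exists k; split => //; rewrite inE H1; apply/connectP; by exists p.
Qed.

Lemma dep_U x y : y \in U x -> (dep x <= dep y)%N /\ (y != x -> (dep x < dep y)%N).
Proof.
rewrite inE => /connectP[p Hp ->].
elim: p x Hp => [|a p IH] x /=; first by rewrite eqxx.
move=> /andP[Hxa Hp]; have H1 := dadjE Hxa.
have [H2 H3] := IH _ Hp.
have H4 : (dep x < dep (last a p))%N.
  case: (eqVneq (last a p) a) => [->//|/H3]; exact: ltn_trans.
by split; [exact: ltnW|].
Qed.

Lemma tl_notin_hd k x : tl k = x -> x \in U (hd k) -> False.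
Proof.
move=> H1 H2; have [H _] := dep_U H2.
by have := Hor k; rewrite H1 ltnNge H.
Qed.

Lemma K k z : (hd k \in U z) = (tl k \in U z) || (z == hd k).
Proof.
apply/idP/idP.
  move=> H; case: (eqVneq z (hd k)) => [->|Hne]; first by rewrite orbT.
  have [k' [E1 E2]] := U_last H (ltac:(by rewrite eq_sym)).
  by rewrite -(hd_inj E1) E2.
case/orP => [/U_step //|/eqP ->]; exact: U_refl.
Qed.

Lemma K2 k z : ((hd k \in U z)%:R - (tl k \in U z)%:R : R) = (z == hd k)%:R.
Proof.
rewrite K; have [->|Hne] := eqVneq z (hd k); last by rewrite orbF subrr.
rewrite orbT; case: (boolP (tl k \in U (hd k))) => [H|_]; last by rewrite subr0.
by exfalso; apply: (tl_notin_hd (erefl _) H).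
Qed.

Lemma dep_ind (P : V -> Prop) :
  (forall y, (forall z, (dep z < dep y)%N -> P z) -> P y) -> forall y, P y.
Proof.
move=> H y; move: {2}(dep y) (leqnn (dep y)) => n; elim: n y => [|n IH] y Hy.
  apply: H => z Hz; by move: (leq_trans Hz Hy).
apply: H => z Hz; apply: IH; rewrite -ltnS; exact: leq_trans Hz Hy.
Qed.

Lemma U_root y : y \in U r.
Proof.
elim/dep_ind: y => y IH.
case: (eqVneq y r) => [->|Hy]; first exact: U_refl.
have [k Hk] := in_edge Hy; rewrite -Hk; apply: U_step; apply: IH.
by rewrite -Hk; apply: Hor.
Qed.

Lemma child_uniq k1 k2 y : tl k1 = tl k2 -> y \in U (hd k1) -> y \in U (hd k2) -> k1 = k2.
Proof.
move=> Ht; elim/dep_ind: y => y IH H1 H2.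
have side : forall ka kb, tl ka = tl kb -> y = hd ka -> y \in U (hd kb) -> ka = kb.
  move=> ka kb Htab Hy Hb.
  case: (eqVneq y (hd kb)) => [E2|Hne]; first by apply: hd_inj; rewrite -Hy.
  have [k' [E1 E2]] := U_last Hb Hne.
  have Ek : k' = ka by apply: hd_inj; rewrite E1.
  by exfalso; apply: (tl_notin_hd (esym Htab)); rewrite -Ek.
case: (eqVneq y (hd k1)) => [E1|N1]; first exact: side.
case: (eqVneq y (hd k2)) => [E2|N2]; first by apply/esym; apply: side.
have [k' [E1 F1]] := U_last H1 N1.
have [k'' [E2 F2]] := U_last H2 N2.
have Ek : k'' = k' by apply: hd_inj; rewrite E1 E2.
rewrite Ek in F2; apply: IH F1 F2; rewrite -E1; exact: Hor.
Qed.

Lemma child_exists x y : y \in U x -> y != x -> exists k, tl k = x /\ y \in U (hd k).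
Proof.
elim/dep_ind: y => y IH Hy Hne.
have [k' [E1 F1]] := U_last Hy Hne.
case: (eqVneq (tl k') x) => [E2|N2].
  by exists k'; rewrite E2 -E1 U_refl.
have [k [Hk1 Hk2]] := IH (tl k') (ltac:(rewrite -E1; exact: Hor)) F1 N2.
by exists k; split => //; rewrite -E1; apply: U_step.
Qed.

Lemma child_sub x y k : tl k = x -> y \in U (hd k) -> (y \in U x) && (y != x).
Proof.
move=> Hk Hy; apply/andP; split.
  apply: U_trans Hy; apply: U_step; rewrite -Hk; exact: U_refl.
by apply/eqP => Exy; apply: (tl_notin_hd Hk); rewrite -Exy.
Qed.

Lemma card_child x y :
  #|[set k | (tl k == x) && (y \in U (hd k))]%SET| = ((y \in U x) && (y != x)) :> nat.
Proof.
case: (boolP ((y \in U x) && (y != x))) => [/andP[H1 H2]|H].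
  have [k [Hk1 Hk2]] := child_exists H1 H2.
  apply/eqP/cards1P; exists k; apply/eqP; rewrite finset.eqEsubset; apply/andP; split.
    apply/fintype.subsetP => k'; rewrite !inE => /andP[/eqP H3 H4]; apply/eqP.
    by apply: (child_uniq (k1:=k') (k2:=k) (y:=y)) => //; rewrite ?inE // H3.
  by rewrite finset.sub1set inE Hk1 eqxx.
apply/eqP; rewrite cards_eq0; apply/eqP; apply/setP => k; rewrite !inE.
apply/negP => /andP[/eqP H1 H2]; move: H; by rewrite (@child_sub _ y _ H1 (ltac:(by rewrite inE))).
Qed.

Lemma tails_rec (m : V -> R) x :
  \sum_(y in U x) m y = m x + \sum_(k | tl k == x) \sum_(y in U (hd k)) m y.
Proof.
rewrite (bigD1 x) ?U_refl //=; congr (_ + _).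
rewrite (exchange_big_dep predT) //=.
rewrite [RHS]big_mkcond /= [LHS]big_mkcond /=; apply: eq_bigr => y _.
have -> : \sum_(k | (tl k == x) && (y \in U (hd k))) m y =
   \sum_(k in [set k | (tl k == x) && (y \in U (hd k))]%SET) m y.
  by apply: eq_bigl => k; rewrite inE.
rewrite sumr_const card_child.
by case: ifP; rewrite ?mulr1n ?mulr0n.
Qed.

Definition ind (x z : V) : R := (x \in U z)%:R.
Definition ee (mu nu : V -> R) z := \sum_(y in U z) (mu y - nu y).
Definition cost (D : V -> V -> nat) (pi : V -> V -> R) :=
  \sum_x \sum_y (D x y)%:R * pi x y.

Lemma sum_delta (z : V) (g : V -> R) : \sum_x (x == z)%:R * g x = g z.
Proof.
rewrite (bigD1 z) //= eqxx mul1r big1 ?addr0 // => x /negbTE ->; by rewrite mul0r.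
Qed.

Lemma sum_delta1 (z : V) : \sum_x ((x == z)%:R : R) = 1.
Proof. by rewrite -[RHS](sum_delta z (fun _ => 1)); apply: eq_bigr => x _; rewrite mulr1. Qed.

Lemma symdiff_adj a b : adj tl hd a b -> \sum_z `|ind a z - ind b z| = 1.
Proof.
case/existsP => k /orP[/andP[/eqP <- /eqP <-]|/andP[/eqP <- /eqP <-]].
  under eq_bigr do rewrite distrC /ind K2.
  by rewrite -[RHS](sum_delta (hd k) (fun _ => 1)); apply: eq_bigr => z _;
     rewrite mulr1 ger0_norm.
under eq_bigr do rewrite /ind K2.
by rewrite -[RHS](sum_delta (hd k) (fun _ => 1)); apply: eq_bigr => z _;
     rewrite mulr1 ger0_norm.
Qed.

Lemma symdiff_nball x y n : y \in nball tl hd x n -> \sum_z `|ind x z - ind y z| <= n%:R.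
Proof.
elim: n y => [|n IH] y.
  rewrite /nball /= inE => /eqP ->; under eq_bigr do rewrite subrr normr0.
  by rewrite big1.
rewrite nballS inE => /orP[/IH H|].
  by apply: (le_trans H); rewrite ler_nat.
rewrite inE => /existsP[a /andP[Ha Hay]].
apply: (@le_trans _ _ (\sum_z `|ind x z - ind a z| + \sum_z `|ind a z - ind y z|)).
  rewrite -big_split /=; apply: ler_sum => z _; exact: ler_distD.
by rewrite (symdiff_adj Hay) -natr1 lerD2r; apply: IH.
Qed.

Lemma symdiff_le x y : \sum_z `|ind x z - ind y z| <= (gdist tl hd x y)%:R.
Proof.
case: (gdist_spec tl hd x y) => [->|[n [_ Hn ->]]]; last exact: symdiff_nball.
rewrite -sum1_card natr_sum; apply: ler_sum => z _.
by rewrite /ind; do 2 case: (_ \in _); rewrite ?subrr ?normr0 ?subr0 ?sub0r ?normrN ?normr1.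
Qed.

Lemma ee_coupling mu nu pi z : coupling mu nu pi ->
  ee mu nu z = \sum_x \sum_y pi x y * (ind x z - ind y z).
Proof.
case=> _ Hr Hc.
have -> : ee mu nu z = \sum_x ind x z * mu x - \sum_y ind y z * nu y.
  rewrite /ee -sumrB big_mkcond /=; apply: eq_bigr => y _.
  by rewrite /ind; case: (y \in U z); rewrite ?mul1r ?mul0r ?subrr.
under [X in X - _]eq_bigr do rewrite -Hr mulr_sumr.
under [X in _ - X]eq_bigr do rewrite -Hc mulr_sumr.
rewrite [X in _ - X]exchange_big -sumrB; apply: eq_bigr => x _.
rewrite -sumrB; apply: eq_bigr => y _; by rewrite mulrBr ![pi x y * _]mulrC.
Qed.

Lemma lower_bound mu nu pi : coupling mu nu pi ->
  \sum_z `|ee mu nu z| <= cost (gdist tl hd) pi.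
Proof.
move=> Hpi; have Hp : forall x y, 0 <= pi x y by case: Hpi.
apply: (@le_trans _ _ (\sum_z \sum_x \sum_y pi x y * `|ind x z - ind y z|)).
  apply: ler_sum => z _; rewrite (ee_coupling z Hpi).
  apply: (le_trans (ler_norm_sum _ _ _)); apply: ler_sum => x _.
  apply: (le_trans (ler_norm_sum _ _ _)); apply: ler_sum => y _.
  by rewrite normrM ger0_norm.
rewrite exchange_big /cost; apply: ler_sum => x _.
rewrite exchange_big; apply: ler_sum => y _.
rewrite -mulr_sumr mulrC; apply: ler_wpM2r => //; exact: symdiff_le.
Qed.

Lemma step_lemma (D : V -> V -> nat) a' b pi' (c : R) z p :
  coupling a' b pi' -> p != z -> 0 < c -> c <= a' p ->
  (forall y, (D z y <= D p y + 1)%N) ->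
  exists pi, coupling (fun x => a' x + ((x == z)%:R - (x == p)%:R) * c) b pi /\
             cost D pi <= cost D pi' + c.
Proof.
case=> Hp Hr Hc Hpz c0 ca HD.
set l := c / a' p.
have ap0 : 0 < a' p by apply: lt_le_trans ca.
have lc : l * a' p = c by rewrite /l divfK // gt_eqF.
have l0 : 0 <= l by rewrite /l divr_ge0 // ltW.
have l1 : l <= 1 by rewrite /l ler_pdivrMr // mul1r.
pose d x : R := (x == z)%:R - (x == p)%:R.
have sd : forall g : V -> R, \sum_x d x * g x = g z - g p.
  move=> g; rewrite /d; under eq_bigr do rewrite mulrBl.
  by rewrite sumrB !sum_delta.
exists (fun x y => pi' x y + d x * (l * pi' p y)); split; [split|].
- move=> x y; rewrite /d; case: (eqVneq x z) => [->|Nz].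
    rewrite ?eqxx (negbTE (ltac:(by rewrite eq_sym) : z != p)) subr0 mul1r.
    by apply: addr_ge0 => //; exact: mulr_ge0.
  case: (eqVneq x p) => [->|Np]; last by rewrite subrr mul0r addr0.
  rewrite sub0r mulN1r -{1}(mul1r (pi' p y)) -mulrBl; apply: mulr_ge0 => //.
  by rewrite subr_ge0.
- move=> x; rewrite big_split /= Hr -mulr_sumr -mulr_sumr Hr lc //.
- move=> y; rewrite big_split /= Hc; have := sd (fun _ => l * pi' p y).
  by rewrite subrr => ->; rewrite addr0.
have -> : cost D (fun x y => pi' x y + d x * (l * pi' p y)) =
   cost D pi' + \sum_y ((D z y)%:R - (D p y)%:R) * (l * pi' p y).
  rewrite /cost.
  under eq_bigr do (under eq_bigr do rewrite mulrDr; rewrite big_split /=).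
  rewrite big_split /=; congr (_ + _).
  rewrite exchange_big; apply: eq_bigr => y _.
  have := sd (fun x => (D x y)%:R * (l * pi' p y)); rewrite mulrBl => <-.
  by apply: eq_bigr => x _; rewrite mulrCA.
rewrite lerD2l -lc -Hr mulr_sumr; apply: ler_sum => y _.
rewrite -[X in _ <= X]mul1r; apply: ler_wpM2r; first exact: mulr_ge0.
by rewrite lerBlDl natr1 ler_nat -addn1.
Qed.

Lemma coupling_tr (mu nu : V -> R) (pi : V -> V -> R) : coupling mu nu pi -> coupling nu mu (fun x y => pi y x).
Proof. by case=> H1 H2 H3; split. Qed.

Lemma cost_tr (D : V -> V -> nat) (pi : V -> V -> R) :
  cost D (fun x y => pi y x) = cost (fun x y => D y x) pi.
Proof. by rewrite /cost exchange_big. Qed.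

Lemma ee_root (mu nu : V -> R) : \sum_x mu x = \sum_x nu x -> ee mu nu r = 0.
Proof.
move=> H; rewrite /ee (eq_bigl predT) ?sumrB ?H ?subrr // => y; exact: U_root.
Qed.

Lemma ee_neg (mu nu : V -> R) w : ee nu mu w = - ee mu nu w.
Proof. by rewrite /ee -sumrN; apply: eq_bigr => y _; rewrite opprB. Qed.

Lemma ee_rec (mu nu : V -> R) x :
  ee mu nu x = (mu x - nu x) + \sum_(k | tl k == x) ee mu nu (hd k).
Proof. exact: tails_rec. Qed.

Lemma ee_zero (mu nu : V -> R) : (forall z, ee mu nu z = 0) -> forall x, mu x = nu x.
Proof.
move=> H x; have := ee_rec mu nu x; rewrite H big1 ?addr0 => [|k _]; last exact: H.
by move/esym/eqP; rewrite subr_eq0 => /eqP.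
Qed.

Lemma sum_in_delta w z : \sum_(y in U w) ((y == z)%:R : R) = ind z w.
Proof.
rewrite big_mkcond /= -[RHS](sum_delta z (fun y => ind y w)); apply: eq_bigr => y _.
by rewrite /ind; case: (y \in U w); case: (y == z); rewrite ?mulr1 ?mulr0.
Qed.

Lemma ee_shift (mu nu : V -> R) kz c w :
  ee (fun x => mu x - ((x == hd kz)%:R - (x == tl kz)%:R) * c) nu w =
  ee mu nu w - c * (w == hd kz)%:R.
Proof.
rewrite /ee.
have -> : \sum_(y in U w) (mu y - ((y == hd kz)%:R - (y == tl kz)%:R) * c - nu y) =
  \sum_(y in U w) (mu y - nu y) - \sum_(y in U w) ((y == hd kz)%:R - (y == tl kz)%:R) * c.
  by rewrite -sumrB; apply: eq_bigr => y _; rewrite addrAC.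
rewrite -mulr_suml; congr (_ - _); by rewrite sumrB !sum_in_delta K2 mulrC.
Qed.

Lemma diag_case (mu nu : V -> R) : (forall x, 0 <= mu x) -> (forall z, ee mu nu z = 0) ->
  exists pi, coupling mu nu pi /\ cost (gdist tl hd) pi <= \sum_z `|ee mu nu z|.
Proof.
move=> Hmu H; have Emn := ee_zero H.
exists (fun x y => (x == y)%:R * mu x); split; [split|].
- by move=> x y; apply: mulr_ge0.
- move=> x; rewrite -[RHS](sum_delta x (fun _ => mu x)); apply: eq_bigr => y _.
  by rewrite eq_sym.
- by move=> y; rewrite -Emn; apply: sum_delta.
rewrite big1 => [|z _]; last by rewrite H normr0.
rewrite /cost big1 // => x _; rewrite big1 // => y _.
case: (eqVneq x y) => [->|]; first by rewrite gdist_refl mul0r.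
by move=> _; rewrite mul0r mulr0.
Qed.

Definition supp (mu nu : V -> R) := [set z | ee mu nu z != 0]%SET.

Lemma gdist_parent kz y : (gdist tl hd (hd kz) y <= gdist tl hd (tl kz) y + 1)%N.
Proof.
rewrite addnC; apply: (leq_trans (gdist_triangle _ _ (hd kz) (tl kz) y)).
rewrite leq_add2r; apply: gdist_adj; apply/existsP; exists kz.
by rewrite !eqxx orbT.
Qed.

Lemma key n
  (IH : forall mu nu : V -> R, (forall x, 0 <= mu x) -> (forall x, 0 <= nu x) ->
     \sum_x mu x = \sum_x nu x -> (#|supp mu nu| <= n)%N ->
     exists pi, coupling mu nu pi /\ cost (gdist tl hd) pi <= \sum_z `|ee mu nu z|)
  (mu nu : V -> R) z :
  (forall x, 0 <= mu x) -> (forall x, 0 <= nu x) ->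
  \sum_x mu x = \sum_x nu x -> (#|supp mu nu| <= n.+1)%N ->
  (forall k, tl k = z -> ee mu nu (hd k) = 0) -> 0 < ee mu nu z ->
  exists pi, coupling mu nu pi /\ cost (gdist tl hd) pi <= \sum_z `|ee mu nu z|.
Proof.
move=> Hmu Hnu Hs Hn Hch Hpos.
have zr : z != r by apply/eqP => Ez; move: Hpos; rewrite Ez ee_root // ltxx.
have [kz Hkz] := in_edge zr.
set p := tl kz.
have pz : p != z by apply/eqP => Epz; have := Hor kz; rewrite -/p Epz Hkz ltnn.
set c := ee mu nu z.
have ec : c = mu z - nu z.
  rewrite /c ee_rec big1 ?addr0 // => k /eqP; exact: Hch.
pose mu' := fun x => mu x - ((x == hd kz)%:R - (x == tl kz)%:R) * c.
have Hmu' : forall x, 0 <= mu' x.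
  move=> x; rewrite /mu' Hkz -/p; case: (eqVneq x z) => [->|Nz].
    by rewrite (negbTE (ltac:(by rewrite eq_sym) : z != p)) subr0 mul1r ec opprB addrCA subrr addr0.
  case: (eqVneq x p) => [->|_]; last by rewrite subrr mul0r subr0.
  by rewrite sub0r mulN1r opprK; apply: addr_ge0 => //; exact: ltW.
have Hs' : \sum_x mu' x = \sum_x nu x.
  rewrite /mu' sumrB -mulr_suml sumrB !sum_delta1 subrr mul0r subr0.
  exact: Hs.
have Hee' : forall w, ee mu' nu w = ee mu nu w - c * (w == z)%:R.
  by move=> w; rewrite /mu' ee_shift Hkz.
have Hsupp : (#|supp mu' nu| <= n)%N.
  rewrite -ltnS; apply: (leq_trans _ Hn); apply: proper_card.
  rewrite fintype.properE; apply/andP; split.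
    apply/fintype.subsetP => w; rewrite !inE Hee'; case: (eqVneq w z) => [->|_].
      by rewrite mulr1 subrr eqxx.
    by rewrite mulr0 subr0.
  apply/negP => /fintype.subsetP /(_ z); rewrite !inE Hee' eqxx mulr1 subrr eqxx /=.
  by move=> /(_ (lt0r_neq0 Hpos)).
have [pi' [Hpi' Hc']] := IH _ _ Hmu' Hnu Hs' Hsupp.
have [pi [Hpi Hc]] := @step_lemma (gdist tl hd) mu' nu pi' c z p Hpi' pz Hpos
   (ltac:(rewrite /mu' Hkz -/p (negbTE pz) eqxx sub0r mulN1r opprK lerDr; exact: Hmu))
   (ltac:(by move=> y; rewrite -Hkz; apply: gdist_parent)).
have Emu : (fun x => mu' x + ((x == z)%:R - (x == p)%:R) * c) = mu.
  by apply: funext => x; rewrite /mu' Hkz subrK.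
rewrite Emu in Hpi; exists pi; split => //.
apply: (le_trans Hc); apply: (@le_trans _ _ (\sum_z `|ee mu' nu z| + c)); first by rewrite lerD2r.
rewrite [X in _ <= X](bigD1 z) //= [X in X + _ <= _](bigD1 z) //= Hee' eqxx mulr1 subrr normr0 add0r.
rewrite addrC gtr0_norm // -/c lerD2r le_eqVlt; apply/orP; left; apply/eqP.
by apply: eq_bigr => w /negbTE Nw; rewrite Hee' Nw mulr0 subr0.
Qed.

Lemma ub n : forall mu nu : V -> R, (forall x, 0 <= mu x) -> (forall x, 0 <= nu x) ->
     \sum_x mu x = \sum_x nu x -> (#|supp mu nu| <= n)%N ->
     exists pi, coupling mu nu pi /\ cost (gdist tl hd) pi <= \sum_z `|ee mu nu z|.
Proof.
elim: n => [|n IH] mu nu Hmu Hnu Hs Hn.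
  apply: diag_case => // z; apply/eqP; apply/negPn/negP => Hz.
  by move: Hn; rewrite leqn0 cards_eq0 => /eqP/setP/(_ z); rewrite !inE Hz.
case: (pickP (fun z => ee mu nu z != 0)) => [z0 Hz0|H0]; last first.
  by apply: diag_case => // z; move: (H0 z) => /= /negbFE/eqP.
case: (@arg_maxnP _ z0 (fun z => ee mu nu z != 0) (gdist tl hd r) Hz0) => z Hz Hmax.
have Hch : forall k, tl k = z -> ee mu nu (hd k) = 0.
  move=> k Hk; apply/eqP; apply/negPn/negP => Hk2.
  have H1 := Hmax _ Hk2; have H2 := Hor k; rewrite Hk in H2.
  by move: (leq_trans H2 H1); rewrite ltnn.
case: (ltrgtP 0 (ee mu nu z)) => [Hpos|Hneg|Hzero]; last by rewrite -Hzero eqxx in Hz.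
  exact: (@key n IH mu nu z Hmu Hnu Hs Hn Hch Hpos).
have Hsupp : supp nu mu = supp mu nu by apply/setP => w; rewrite !inE ee_neg oppr_eq0.
have [pi [Hpi Hc]] := @key n IH nu mu z Hnu Hmu (esym Hs) (ltac:(by rewrite Hsupp))
  (ltac:(by move=> k Hk; rewrite ee_neg Hch // oppr0)) (ltac:(by rewrite ee_neg oppr_gt0)).
exists (fun x y => pi y x); split; first exact: coupling_tr.
rewrite cost_tr; under eq_bigr do rewrite ee_neg normrN.
move: Hc; congr (_ <= _); rewrite /cost; apply: eq_bigr => x _; apply: eq_bigr => y _.
by rewrite gdist_sym.
Qed.

Lemma W1_tree (mu nu : V -> R) : isProb mu -> isProb nu ->
  W1 tl hd mu nu = \sum_z `|ee mu nu z|.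
Proof.
case=> Hmu Smu [Hnu Snu].
have [pi [Hpi Hc]] := @ub #|V| mu nu Hmu Hnu (ltac:(by rewrite Smu Snu)) (max_card _).
set S := [set c | exists pi, coupling mu nu pi /\
               c = \sum_x \sum_y (gdist tl hd x y)%:R * pi x y].
have lb : lbound S (\sum_z `|ee mu nu z|).
  by move=> c [pi' [Hpi' ->]]; exact: lower_bound.
apply/eqP; rewrite eq_le; apply/andP; split.
  apply: le_trans Hc; apply: ge_inf; first by exists (\sum_z `|ee mu nu z|).
  by exists pi.
by apply: lb_le_inf => //; exists (cost (gdist tl hd) pi); exists pi.
Qed.

End T.

Section C.
Variable R : realType.

Lemma cvg_sum_fin {T : Type} (F : set_system T) {FF : Filter F} (I : Type) (s : seq I)
  (P : pred I) (g : I -> T -> R) (l : I -> R) :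
  (forall i, P i -> g i @ F --> l i) ->
  (fun h => \sum_(i <- s | P i) g i h) @ F --> \sum_(i <- s | P i) l i.
Proof.
move=> H; elim: s => [|i s IH].
  rewrite big_nil; under eq_fun do rewrite big_nil; exact: cvg_cst.
rewrite big_cons; under eq_fun do rewrite big_cons.
case: (boolP (P i)) => Pi //.
exact: (cvgD (H i Pi) IH).
Qed.

Definition Ft (t : R) := within [set h : R | 0 <= t + h <= 1] (0:R)^'.

Global Instance Ft_filter t : Filter (Ft t).
Proof. exact: within_filter. Qed.

Lemma Ft_in t : \forall h \near Ft t, h != 0 /\ 0 <= t + h <= 1.
Proof.
rewrite /Ft near_withinE; apply: filterS (nbhs_dnbhs_neq (0:R)) => h H1 H2; split => //.
Qed.

Lemma uniq01 t (g : R -> R) (a b : R) : 0 <= t <= 1 ->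
  g @ Ft t --> a -> g @ Ft t --> b -> a = b.
Proof.
case/andP => t0 t1 Ha Hb.
have [tl1|te1] : t < 1 \/ t = 1.
  by move: t1; rewrite le_eqVlt => /orP[/eqP->|->]; [right|left].
- have H : (0:R)^'+ --> Ft t.
    move=> P; rewrite !nbhs_filterE /Ft /at_right /dnbhs /within /= => HP0.
    have HP : \forall h \near nbhs (0:R), h != 0 -> 0 <= t + h <= 1 -> P h := HP0.
    have G : \forall h \near nbhs (0:R), 0 < h -> P h; last exact: G.
    have HB : \forall h \near nbhs (0:R), h < 1 - t by apply: lt_nbhsl; rewrite subr_gt0.
    apply: filterS2 HP HB => h HP Hh hpos; apply: HP; first by rewrite gt_eqF.
    rewrite /= (addr_ge0 t0 (ltW hpos)) /=; rewrite -lerBrDl; exact: ltW.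
  have Ha' := cvg_trans (cvg_app g H) Ha.
  have Hb' := cvg_trans (cvg_app g H) Hb.
  exact: (cvg_unique _ Ha' Hb').
- have H : (0:R)^'- --> Ft t.
    move=> P; rewrite !nbhs_filterE /Ft /at_left /dnbhs /within /= => HP0.
    have HP : \forall h \near nbhs (0:R), h != 0 -> 0 <= t + h <= 1 -> P h := HP0.
    have G : \forall h \near nbhs (0:R), h < 0 -> P h; last exact: G.
    have HB : \forall h \near nbhs (0:R), -1 < h by apply: lt_nbhsr; rewrite oppr_lt0.
    apply: filterS2 HP HB => h HP Hh hneg; apply: HP; first by rewrite lt_eqF.
    by rewrite /= te1 -lerBlDl sub0r (ltW Hh) /= gerDl ltW.
  have Ha' := cvg_trans (cvg_app g H) Ha.
  have Hb' := cvg_trans (cvg_app g H) Hb.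
  exact: (cvg_unique _ Ha' Hb').
Qed.


Section D.
Variables (V E : finType) (tl hd : E -> V) (r : V) (f df : R -> V -> R).
Hypothesis Htree : is_tree tl hd.
Hypothesis Hor : oriented_away tl hd r.
Hypothesis Hprob : forall t, 0 <= t <= 1 -> isProb (f t).
Hypothesis HC1 : C1_on01 f df.

Local Notation U := (subtree tl hd).
Local Notation T := (tails tl hd).

Lemma dtails t x : 0 <= t <= 1 ->
  (fun h => (T f (t + h) x - T f t x) / h) @ Ft t --> T df t x.
Proof.
move=> Ht.
have -> : (fun h => (T f (t + h) x - T f t x) / h) =
          (fun h => \sum_(y in U x) (f (t + h) y - f t y) / h).
  by apply: funext => h; rewrite /tails -sumrB mulr_suml.
apply: cvg_sum_fin => y _; case: HC1 => H _; exact: H.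
Qed.

Lemma W1_step t h : 0 <= t + h <= 1 -> 0 <= t <= 1 ->
  W1 tl hd (f (t + h)) (f t) = \sum_x `|T f (t + h) x - T f t x|.
Proof.
move=> H1 H2; rewrite (W1_tree Htree Hor (Hprob H1) (Hprob H2)).
by apply: eq_bigr => x _; rewrite /ee /tails sumrB.
Qed.

Lemma speed t : 0 <= t <= 1 -> metric_speed_is tl hd f t (\sum_x `|T df t x|).
Proof.
move=> Ht.
have Hlim : (fun h => \sum_x `|(T f (t + h) x - T f t x) / h|) @ Ft t -->
    \sum_x `|T df t x|.
  by apply: cvg_sum_fin => x _; apply: cvg_norm; exact: dtails.
rewrite /metric_speed_is; apply: cvg_trans Hlim; apply: near_eq_cvg.
apply: filterS (Ft_in t) => h [hn0 hA] /=.
rewrite (W1_step hA Ht) mulr_suml; apply: eq_bigr => x _.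
by rewrite normrM normfV.
Qed.

Lemma tails_root (mu : R -> V -> R) t : T mu t r = \sum_y mu t y.
Proof.
by rewrite /tails; apply: eq_bigl => y; rewrite (U_root Htree Hor).
Qed.

Lemma dF_root t : 0 <= t <= 1 -> T df t r = 0.
Proof.
move=> Ht; apply: (uniq01 Ht (@dtails t r Ht)).
apply: (cvg_trans (G := (fun _ => (0:R)) @ Ft t)); last exact: cvg_cst.
apply: near_eq_cvg.
apply: filterS (Ft_in t) => h [hn0 hA] /=.
rewrite !tails_root; case: (Hprob hA) => _ ->; case: (Hprob Ht) => _ ->.
by rewrite subrr mul0r.
Qed.

Lemma sum_hd (phi : V -> R) : \sum_k phi (hd k) = \sum_x phi x - phi r.
Proof.
rewrite [X in _ = X - _](bigD1 r) //= addrAC subrr add0r.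
have Himg : (hd @: [set: E] = [set~ r])%SET.
  apply/setP => y; rewrite !inE; apply/imsetP/idP.
    by case=> k _ ->; exact: (hd_neq_r Hor).
  by move=> Hy; have [k Hk] := in_edge Htree Hor Hy; exists k; rewrite ?inE.
have -> : \sum_k phi (hd k) = \sum_(k in [set: E]%SET) phi (hd k).
  by apply: eq_bigl => k; rewrite inE.
rewrite -(big_imset phi (h:=hd) (A:=[set: E]%SET)); last first.
  by move=> a b _ _; apply: (hd_inj Htree Hor).
rewrite Himg; apply: eq_bigl => y; by rewrite !inE.
Qed.


Lemma meas_df y : measurable_fun (`[0%R, 1%R]%classic : set R) (fun t => df t y).
Proof.
apply: measurable_realfun.subspace_continuous_measurable_fun; first exact: measurable_itv.
by case: HC1 => _ H; exact: H.
Qed.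

Lemma meas_a x : measurable_fun (`[0%R, 1%R]%classic : set R) (fun t => T df t x).
Proof.
have -> : (fun t => T df t x) = (fun t => \sum_(y <- index_enum V) (if y \in U x then df t y else 0)).
  by apply: funext => t; rewrite /tails big_mkcond.
apply: measurable_sum => y; case: (y \in U x); first exact: meas_df.
exact: measurable_cst.
Qed.

Section Geo.
Hypothesis Hgeo : const_speed_geodesic tl hd f.
Hypothesis Hne : f 0 <> f 1.
Local Notation W := (W1 tl hd (f 0) (f 1)).

Lemma in01_0 : 0 <= (0:R) <= 1. Proof. by rewrite lexx ler01. Qed.
Lemma in01_1 : 0 <= (1:R) <= 1. Proof. by rewrite lexx ler01. Qed.

Lemma W_pos : 0 < W.
Proof.
rewrite (W1_tree Htree Hor (Hprob in01_0) (Hprob in01_1)).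
rewrite lt_def sumr_ge0 ?andbT; last by move=> z _; exact: normr_ge0.
apply/negP => /eqP H; apply: Hne; apply: funext.
apply: (ee_zero Htree Hor) => z; apply/eqP; rewrite -normr_eq0; apply/eqP.
by apply: (psumr_eq0P _ H) => // i _; exact: normr_ge0.
Qed.

Lemma s_eq t : 0 <= t <= 1 -> \sum_x `|T df t x| = W.
Proof.
move=> Ht; apply: (uniq01 Ht (speed Ht : _ @ Ft t --> _)).
apply: (cvg_trans (G := (fun _ => W) @ Ft t)); last exact: cvg_cst.
apply: near_eq_cvg.
apply: filterS (Ft_in t) => h [hn0 hA] /=.
rewrite (Hgeo hA Ht) (_ : t + h - t = h); last by rewrite addrC addKr.
by rewrite mulrAC divff ?mul1r // normr_eq0.
Qed.

Lemma g_prob t : 0 <= t <= 1 ->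
  isProb (fun k => `|T df t (hd k)| / \sum_x `|T df t x|).
Proof.
move=> Ht; rewrite (s_eq Ht); split.
  by move=> k; apply: divr_ge0 => //; apply: ltW; exact: W_pos.
rewrite -mulr_suml (sum_hd (fun y => `|T df t y|)) (dF_root Ht) normr0 subr0.
by rewrite (s_eq Ht) divff // gt_eqF // W_pos.
Qed.

Lemma transport :
  transport_eq tl hd df (fun t k => Num.sg (T df t (hd k)) * \sum_x `|T df t x|)
    (fun t k => `|T df t (hd k)| / \sum_x `|T df t x|).
Proof.
apply: aeW => t; rewrite /= in_itv /= => Ht x.
rewrite (s_eq Ht).
have HW : W != 0 by rewrite gt_eqF // W_pos.
under eq_bigr do rewrite -mulrA mulrACA divff // mulr1 mulr_sg_norm.
rewrite /omega; under eq_bigr do rewrite mulrBl.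
rewrite sumrB (sum_hd (fun y => (y == x)%:R * T df t y)) (dF_root Ht) mulr0 subr0.
rewrite sum_delta.
rewrite (eq_bigr (fun i => if tl i == x then T df t (hd i) else 0)); last first.
  by move=> i _; case: (tl i == x); rewrite ?mul1r ?mul0r.
rewrite -big_mkcond /= {1}/tails (tails_rec Htree Hor (df t) x).
by rewrite addrK.
Qed.

Lemma meas_v k : measurable_fun (`[0%R, 1%R]%classic : set R)
  (fun t => Num.sg (T df t (hd k)) * \sum_x `|T df t x|).
Proof.
have mh : measurable_fun (`[0%R, 1%R]%classic : set R)
   (fun t => ((if 0 < T df t (hd k) then 1 else 0)
    - (if T df t (hd k) < 0 then 1 else 0)) * W).
  apply: measurable_realfun.measurable_funM; last exact: measurable_cst.
  apply: measurable_realfun.measurable_funB.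
    apply: measurable_fun_if; [exact: measurable_itv| |exact: measurable_cst|exact: measurable_cst].
    exact: (measurable_realfun.measurable_fun_ltr (f := fun _ => 0) (g := fun t => T df t (hd k)) (measurable_cst _) (meas_a _)).
  apply: measurable_fun_if; [exact: measurable_itv| |exact: measurable_cst|exact: measurable_cst].
  exact: (measurable_realfun.measurable_fun_ltr (g := fun _ => 0) (f := fun t => T df t (hd k)) (meas_a _) (measurable_cst _)).
apply: eq_measurable_fun mh => t; rewrite inE /= in_itv /= => Ht.
rewrite (s_eq Ht); congr (_ * _).
case: (ltrgtP 0 (T df t (hd k))) => Hc; first by rewrite gtr0_sg // subr0.
  by rewrite sub0r ltr0_sg.
by rewrite -Hc sgr0 subr0.
Qed.

Lemma meas_g k : measurable_fun (`[0%R, 1%R]%classic : set R)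
  (fun t => `|T df t (hd k)| / \sum_x `|T df t x|).
Proof.
have mh : measurable_fun (`[0%R, 1%R]%classic : set R) (fun t => `|T df t (hd k)| * W^-1).
  apply: measurable_realfun.measurable_funM; last exact: measurable_cst.
  apply: measurableT_comp; [exact: measurable_realfun.normr_measurable | exact: meas_a].
by apply: eq_measurable_fun mh => t; rewrite inE /= in_itv /= => Ht; rewrite (s_eq Ht).
Qed.


Lemma Iq_eq q : 1 <= q ->
  Iq (fun t k => Num.sg (T df t (hd k)) * \sum_x `|T df t x|)
     (fun t k => `|T df t (hd k)| / \sum_x `|T df t x|) q = W.
Proof.
move=> q1.
have W0 : 0 < W := W_pos.
rewrite /Iq.
rewrite (@eq_integral _ _ _ _ _ (fun _ => (W `^ q)%:E)); last first.
  move=> t; rewrite inE /= in_itv /= => Ht; congr (_%:E).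
  have Hg := (g_prob Ht).2; rewrite (s_eq Ht) in Hg *.
  rewrite (_ : W `^ q = (\sum_k `|T df t (hd k)| / W) * W `^ q); last by rewrite Hg mul1r.
  rewrite mulr_suml; apply: eq_bigr => k _.
  case: (eqVneq (T df t (hd k)) 0) => [->|Hk]; first by rewrite normr0 !mul0r.
  by rewrite normrM normr_sg Hk mul1r ger0_norm // ltW.
rewrite integral_cst; last exact: measurable_itv.
rewrite [X in (_ * X)%E](_ : _ = 1%E); last first.
  by apply: (eq_trans (lebesgue_measure_itv _)); rewrite /= lte_fin ltr01 /= -EFinD subr0.
rewrite mule1 /=.
by rewrite -powRrM mulfV ?gt_eqF ?(lt_le_trans ltr01 q1) // powRr1 // ltW.
Qed.

End Geo.
End D.
End C.

Unset Implicit Arguments.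

Theorem mainTheorem2 (R : realType) (V E : finType) (tl hd : E -> V) (r : V)
  (f df : R -> V -> R) :
  is_tree tl hd -> oriented_away tl hd r ->
  (forall t, 0 <= t <= 1 -> isProb (f t)) ->
  C1_on01 f df ->
  let s := fun t : R => \sum_x `|tails tl hd df t x| in
  (forall t, 0 <= t <= 1 -> metric_speed_is tl hd f t (s t)) /\
  (const_speed_geodesic tl hd f -> f 0 <> f 1 ->
     (forall t, 0 <= t <= 1 ->
        s t = W1 tl hd (f 0) (f 1) /\ 0 < W1 tl hd (f 0) (f 1)) /\
     let v := fun t k => Num.sg (tails tl hd df t (hd k)) * s t in
     let g := fun t k => `|tails tl hd df t (hd k)| / s t in
     [/\ forall k, measurable_fun (`[0%R, 1%R]%classic : set R) (fun t : R => v t k),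
         forall k, measurable_fun (`[0%R, 1%R]%classic : set R) (fun t : R => g t k),
         forall t, 0 <= t <= 1 -> isProb (g t),
         transport_eq tl hd df v g &
         forall q : R, 1 <= q -> Iq v g q = W1 tl hd (f 0) (f 1)]).
Proof.
move=> Htree Hor Hprob HC1 s; split.
  by move=> t Ht; apply: speed; eassumption.
move=> Hgeo Hne; split.
  move=> t Ht; split; first by apply: s_eq; eassumption.
  by apply: W_pos; eassumption.
move=> v g; split.
- by move=> k; rewrite /v /s; apply: meas_v; eassumption.
- by move=> k; rewrite /g /s; apply: meas_g; eassumption.
- by move=> t Ht; rewrite /g /s; apply: g_prob; eassumption.
- by rewrite /v /g /s; apply: transport; eassumption.
- by move=> q Hq; rewrite /v /g /s; apply: Iq_eq; eassumption.
Qed.
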